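(* Let $S$ be a $1$-synchronizable system. Let $\tau\in T_0(S)$ and $a,b_1,\dots,b_n\in\Sigma_M$ be such that $\tau\cdot !?a\in T_0(S)$, $\tau\cdot !?b_1\cdots !?b_n\in T_0(S)$, and $\mathrm{src}(a)\neq\mathrm{src}(b_i)$ for all $i\in\{1,\dots,n\}$. Then $\tau\cdot !?a\cdot !?b_1\cdots !?b_n\in T_0(S)$, $\tau\cdot !?b_1\cdots !?b_n\cdot !?a\in T_0(S)$, and $\tau\cdot !?a\cdot !?b_1\cdots !?b_n\equiv_S\tau\cdot !?b_1\cdots !?b_n\cdot !?a$.
   Context: A message set $M=(\Sigma_M,N,\mathrm{src},\mathrm{dst})$: finite set of messages, $N\ge1$ peers, $\mathrm{src}(a)\neq\mathrm{dst}(a)\in\{1,\dots,N\}$. Actions $!a$ (by peer $\mathrm{src}(a)$), $?a$ (by peer $\mathrm{dst}(a)$); traces are finite action sequences; $!?a$ abbreviates $!a\cdot?a$. For a trace $\tau$, $\pi_!(\tau)$ is the sequence of sent messages; $\mathrm{buf}_{i\to j}(\tau)$ is the word $w$ (if any) with (sent on $i\to j$) $=$ (received on $i\to j$)$\cdot w$. $\tau$ is FIFO ($k$-bounded FIFO) if for all $i,j$ and prefixes $\tau'$, $\mathrm{buf}_{i\to j}(\tau')$ is defined (and has length $\le k$); synchronous if of the form $!?a_1\cdots!?a_k$. A system $S=(P_1,\dots,P_N)$: finite automata $P_i$ (all states accepting) over actions of peer $i$, with one FIFO channel per ordered pair $i\neq j$. A configuration: one control state per peer and contents $w_{i,j}$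 of channels; stable if all channels empty. $!a$ ($\mathrm{src}(a)=i,\mathrm{dst}(a)=j$) moves $P_i$ and appends $a$ to $w_{i,j}$; $?a$ moves $P_j$ and removes $a$ from the head of $w_{i,j}$; $c_0$ is the initial configuration. $T_k(S)$ ($k\ge1$): $k$-bounded FIFO traces $\tau$ with $c_0\xrightarrow{\tau}c$ for some $c$; $T_0(S)$: synchronous such traces; $T_\omega(S)=\bigcup_kT_k(S)$. $\tau_1\equiv_S\tau_2$ iff $\tau_1,\tau_2\in T_\omega(S)$ and there is $c$ with $c_0\xrightarrow{\tau_1}c$ and $c_0\xrightarrow{\tau_2}c$. $ST_k(S)=\{\pi_!(\tau)\mid\tau\in T_k(S)\}\cup\{(\pi_!(\tau),c)\mid c_0\xrightarrow{\tau}c,\ c\text{ stable},\ \tau\in T_k(S)\}$; $S$ is $1$-synchronizable if $ST_0(S)=ST_1(S)$. *)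

(* Defs.v *)
From HB Require Import structures.
From mathcomp Require Import all_boot.
Set Implicit Arguments. Unset Strict Implicit. Unset Printing Implicit Defensive.

(* A message set M = (Sigma_M, N, src, dst); peers are 'I_N (0-indexed). *)
Record msgset := MsgSet {
  msg : finType;
  npeers : nat;
  npeers_pos : 0 < npeers;
  src : msg -> 'I_npeers;
  dst : msg -> 'I_npeers;
  src_neq_dst : forall a, src a != dst a }.

Section Defs.
Variable M : msgset.
Notation Msg := (msg M).
Notation peer := ('I_(npeers M)).

Inductive action := Send of Msg | Recv of Msg.

Definition actor (x : action) : peer :=
  match x with Send a => src a | Recv a => dst a end.

Definition trace := seq action.

(* !?a = !a . ?a, and !?a_1 ... !?a_k *)
Definition sync (s : seq Msg) : trace := flatten [seq [:: Send a; Recv a] | a <- s].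

Definition sent_of (x : action) : option Msg := if x is Send a then Some a else None.
Definition recv_of (x : action) : option Msg := if x is Recv a then Some a else None.

Definition pi_send (t : trace) : seq Msg := pmap sent_of t.

Definition on_chan (i j : peer) (a : Msg) := (src a == i) && (dst a == j).
Definition sent_on i j (t : trace) := filter (on_chan i j) (pmap sent_of t).
Definition recv_on i j (t : trace) := filter (on_chan i j) (pmap recv_of t).

Definition buf_defined i j (t : trace) := prefix (recv_on i j t) (sent_on i j t).
Definition buf_size i j (t : trace) := size (sent_on i j t) - size (recv_on i j t).

Definition fifo (t : trace) :=
  forall n, n <= size t -> forall i j, buf_defined i j (take n t).
Definition kfifo (k : nat) (t : trace) :=
  forall n, n <= size t -> forall i j,
    buf_defined i j (take n t) /\ buf_size i j (take n t) <= k.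
Definition synchronous (t : trace) := exists s, t = sync s.

(* A system: one finite automaton per peer (all states accepting), whose
   transitions are labelled by actions of that peer. *)
Record system := System {
  St : peer -> finType;
  init : forall i, St i;
  trans : forall i, St i -> action -> St i -> bool;
  trans_local : forall (i : peer) (q : St i) x q', trans q x q' -> actor x = i }.

Variable S : system.

Record config := Config {
  cstate : forall i, St S i;
  chan : peer -> peer -> seq Msg }.

Definition c0 : config := Config (init S) (fun _ _ => [::]).

Definition stable (c : config) := forall i j, chan c i j = [::].

Definition step (c : config) (x : action) (c' : config) : Prop :=
  let p := actor x in
  trans (cstate c p) x (cstate c' p) /\
  (forall k, k != p -> cstate c' k = cstate c k) /\
  match x with
  | Send a => chan c' (src a) (dst a) = rcons (chan c (src a) (dst a)) a /\
      (forall i j, (i, j) != (src a, dst a) -> chan c' i j = chan c i j)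
  | Recv a => chan c (src a) (dst a) = a :: chan c' (src a) (dst a) /\
      (forall i j, (i, j) != (src a, dst a) -> chan c' i j = chan c i j)
  end.

Inductive reach : config -> trace -> config -> Prop :=
  | reach_nil c : reach c [::] c
  | reach_cons c x c' t c'' : step c x c' -> reach c' t c'' -> reach c (x :: t) c''.

Definition inT (k : nat) (t : trace) : Prop :=
  (if k is 0 then synchronous t else kfifo k t) /\ exists c, reach c0 t c.

Definition inTomega (t : trace) : Prop := exists k, 0 < k /\ inT k t.

Definition equivS (t1 t2 : trace) : Prop :=
  inTomega t1 /\ inTomega t2 /\ exists c, reach c0 t1 c /\ reach c0 t2 c.

Definition ST (k : nat) (X : seq Msg + (seq Msg * config)) : Prop :=
  (exists t, inT k t /\ X = inl (pi_send t)) \/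
  (exists t c, inT k t /\ reach c0 t c /\ stable c /\ X = inr (pi_send t, c)).

Definition synchronizable1 : Prop := forall X, ST 0 X <-> ST 1 X.

End Defs.

Arguments Send {M}.
Arguments Recv {M}.

(* Main.v *)
Require Import Defs.
From mathcomp Require Import all_boot.
From Stdlib Require Import FunctionalExtensionality IndefiniteDescription.
Set Implicit Arguments. Unset Strict Implicit. Unset Printing Implicit Defensive.

Section Aux.
Variable M : msgset.
Variable S : system M.
Notation Msg := (msg M).
Notation peer := ('I_(npeers M)).
Notation chans := (peer -> peer -> seq Msg).
Notation tr := (trace M).

Inductive lrun (i : peer) : St S i -> tr -> St S i -> Prop :=
| lrun_nil q : lrun q [::] q
| lrun_cons q x q' w q'' : trans q x q' -> lrun q' w q'' -> lrun q (x :: w) q''.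

Lemma lrun_cat i (x z : St S i) w1 w2 :
  lrun x (w1 ++ w2) z -> exists y, lrun x w1 y /\ lrun y w2 z.
Proof.
elim: w1 x => [|u w1 IH] x /=; first by exists x; split => //; constructor.
move=> H; inversion H; subst.
have [y [H1 H2]] := IH _ H5. exists y; split => //. by econstructor; eauto.
Qed.

Definition proj (i : peer) (t : tr) := [seq x <- t | actor x == i].

Lemma reach_lrun (c c' : config S) t : reach c t c' ->
  forall i, lrun (cstate c i) (proj i t) (cstate c' i).
Proof.
elim=> {c t c'} [c|c x c1 t c'' Hst Hr IH] i; first by constructor.
move: Hst => [Htr [Hoth _]].
rewrite /proj /=; case: eqP => [<-|ne].
  by econstructor; [exact Htr | exact: IH].
rewrite -(Hoth i); first exact: IH.
by apply/eqP => E; apply: ne.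
Qed.

Definition ch0 : chans := fun _ _ => [::].
Definition setch (ch : chans) (a : Msg) (w : seq Msg) : chans :=
  fun i j => if on_chan i j a then w else ch i j.
Definition chstep (ch : chans) (x : action M) : option chans :=
  match x with
  | @Send _ a => Some (setch ch a (rcons (ch (src a) (dst a)) a))
  | @Recv _ a => match ch (src a) (dst a) with
              | b :: w => if b == a then Some (setch ch a w) else None
              | [::] => None end
  end.
Definition bnd (ch : chans) := forall i j, size (ch i j) <= 1.

Inductive run1 : chans -> tr -> chans -> Prop :=
| r1nil ch : bnd ch -> run1 ch [::] ch
| r1cons ch x ch' t ch'' : bnd ch -> chstep ch x = Some ch' -> run1 ch' t ch'' ->
    run1 ch (x :: t) ch''.

Lemma on_chanE (i j : peer) (a : Msg) : on_chan i j a -> src a = i /\ dst a = j.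
Proof. by case/andP => /eqP -> /eqP ->. Qed.

Lemma setch_neq (ch : chans) (a : Msg) w (i j : peer) : (i, j) != (src a, dst a) -> setch ch a w i j = ch i j.
Proof.
rewrite /setch; case: ifP => // /on_chanE [-> ->]. by rewrite eqxx.
Qed.

Lemma setch_eq (ch : chans) (a : Msg) w : setch ch a w (src a) (dst a) = w.
Proof. by rewrite /setch /on_chan !eqxx. Qed.

Lemma reach_of_lruns t (ch ch' : chans) : run1 ch t ch' ->
  forall (c : config S) (f : forall i, St S i), chan c = ch ->
  (forall i, lrun (cstate c i) (proj i t) (f i)) -> reach c t (Config f ch').
Proof.
elim=> {ch t ch'} [ch _|ch x ch1 t ch'' _ Hx _ IH] c f Hc Hl.
  have -> : f = cstate c.
    apply: functional_extensionality_dep => i.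
    by have := Hl i; rewrite /proj /= => H; inversion H.
  by rewrite -Hc; case: c {Hl Hc}; constructor.
have H' : forall i, exists m : St S i,
   (if actor x == i then trans (cstate c i) x m = true else m = cstate c i) /\
   lrun m (proj i t) (f i).
  move=> i; have := Hl i; rewrite /proj /=; case: eqP => _ H.
    by inversion H; subst; eexists; split; eauto.
  by exists (cstate c i).
pose g := fun i => proj1_sig (constructive_indefinite_description _ (H' i)).
have Hg : forall i, (if actor x == i then trans (cstate c i) x (g i) = true else g i = cstate c i) /\
   lrun (g i) (proj i t) (f i).
  by move=> i; rewrite /g; case: (constructive_indefinite_description _ _).
econstructor; last by apply: (IH (Config g ch1)) => // i; case: (Hg i).
split; first by have [] := Hg (actor x); rewrite eqxx.
split.
  move=> k nk; have [] := Hg k; rewrite eq_sym (negbTE nk) //.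
move: Hx; rewrite -Hc /=.
case: x {Hg g H' Hl} => a /=.
  case=> <-; split; first by rewrite setch_eq.
  by move=> i j; apply: setch_neq.
case E: (chan c (src a) (dst a)) => [|b w] //.
case: eqP => // -> [<-]; split; first by rewrite setch_eq.
by move=> i j; apply: setch_neq.
Qed.


Lemma run1_bnd ch t ch' : run1 ch t ch' -> bnd ch.
Proof. by case. Qed.

Lemma run1_cat ch t1 ch1 t2 ch2 : run1 ch t1 ch1 -> run1 ch1 t2 ch2 -> run1 ch (t1 ++ t2) ch2.
Proof.
elim=> {ch t1 ch1} [ch _|ch x ch' t ch'' Hb Hx _ IH] H //=.
econstructor; eauto.
Qed.

Lemma run1_take ch t ch' : run1 ch t ch' -> forall n, exists chn, run1 ch (take n t) chn.
Proof.
elim=> {ch t ch'} [ch Hb|ch x ch' t ch'' Hb Hx _ IH] [|n] /=;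
  try by eexists; constructor.
have [chn H] := IH n; eexists; econstructor; eauto.
Qed.

Lemma run1_inv ch t ch' : run1 ch t ch' ->
  forall i j, ch i j ++ sent_on i j t = recv_on i j t ++ ch' i j.
Proof.
elim=> {ch t ch'} [ch Hb|ch x ch' t ch'' Hb Hx _ IH] i j.
  by rewrite /sent_on /recv_on /= cats0.
have IHij := IH i j; move: Hx.
case: x => a /=.
  case=> E; subst ch'; move: IHij; rewrite /sent_on /recv_on /setch /=.
  case: ifP => [/on_chanE [E1 E2]|_] //.
  by subst; rewrite -cats1 -catA.
case E: (ch (src a) (dst a)) => [|b w] //.
case: eqP => // Eb [E']; subst ch' b; move: IHij; rewrite /sent_on /recv_on /setch /=.
case: ifP => [/on_chanE [E1 E2]|_] //.
by subst; rewrite E /= => ->.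
Qed.

Lemma run1_end ch t ch' : run1 ch t ch' -> bnd ch'.
Proof. by elim. Qed.

Lemma kfifo_run1 t ch' : run1 ch0 t ch' -> kfifo 1 t.
Proof.
move=> H n _ i j.
have [chn Hn] := run1_take H n.
have Hi : sent_on i j (take n t) = recv_on i j (take n t) ++ chn i j.
  by rewrite -(run1_inv Hn).
rewrite /buf_defined /buf_size Hi prefix_prefix size_cat addKn; split => //.
exact: (run1_end Hn).
Qed.

Lemma sync_cons (b : Msg) s : sync (b :: s) = [:: Send b, Recv b & sync s].
Proof. by []. Qed.

Lemma sync_cat (s1 s2 : seq Msg) : sync (s1 ++ s2) = sync s1 ++ sync s2.
Proof. by rewrite /sync map_cat flatten_cat. Qed.

Lemma pi_send_cat (t1 t2 : tr) : pi_send (t1 ++ t2) = pi_send t1 ++ pi_send t2.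
Proof. by rewrite /pi_send pmap_cat. Qed.

Lemma pi_sync (s : seq Msg) : pi_send (sync s) = s.
Proof. by elim: s => //= b s IH; rewrite IH. Qed.

Lemma bnd_setch ch (a : Msg) w : bnd ch -> size w <= 1 -> bnd (setch ch a w).
Proof. by move=> Hb Hw i j; rewrite /setch; case: ifP. Qed.

Lemma run1_send ch (a : Msg) : bnd ch -> ch (src a) (dst a) = [::] ->
  run1 ch [:: Send a] (setch ch a [:: a]).
Proof.
move=> Hb E; econstructor; first exact Hb.
  by rewrite /= E.
by constructor; apply: bnd_setch.
Qed.

Lemma run1_recv ch (a : Msg) : bnd ch -> ch (src a) (dst a) = [:: a] ->
  run1 ch [:: Recv a] (setch ch a [::]).
Proof.
move=> Hb E; econstructor; first exact Hb.
  by rewrite /= E eqxx.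
by constructor; apply: bnd_setch.
Qed.

Lemma setch_setch ch (a : Msg) w w' : setch (setch ch a w) a w' = setch ch a w'.
Proof.
apply: functional_extensionality => i; apply: functional_extensionality => j.
by rewrite /setch; case: (on_chan i j a).
Qed.

Lemma setch_id ch (a : Msg) : setch ch a (ch (src a) (dst a)) = ch.
Proof.
apply: functional_extensionality => i; apply: functional_extensionality => j.
by rewrite /setch; case: ifP => // /on_chanE [-> ->].
Qed.

Lemma run1_sync ch (s : seq Msg) : bnd ch -> (forall b, b \in s -> ch (src b) (dst b) = [::]) ->
  run1 ch (sync s) ch.
Proof.
move=> Hb; elim: s => [|b s IH] Hs; first by constructor.
rewrite sync_cons -cat1s -(cat1s (Recv b)).
have E : ch (src b) (dst b) = [::] by apply: Hs; rewrite inE eqxx.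
apply: run1_cat; first exact: run1_send.
apply: run1_cat.
  apply: run1_recv; first by apply: bnd_setch.
  by rewrite setch_eq.
rewrite setch_setch -E setch_id.
by apply: IH => b' Hb'; apply: Hs; rewrite inE Hb' orbT.
Qed.

Lemma run1_sync0 (s : seq Msg) : run1 ch0 (sync s) ch0.
Proof. by apply: run1_sync. Qed.

Lemma bridge (Hs : synchronizable1 S) u ch' (C : config S) :
  run1 ch0 u ch' -> reach (c0 S) u C -> exists C', reach (c0 S) (sync (pi_send u)) C'.
Proof.
move=> Hr HC.
have : @ST M S 1 (inl (pi_send u)).
  left; exists u; split => //; split; [exact: kfifo_run1 Hr | by exists C].
move/Hs => [[t [[[s ->] [C' HC']] E]] | [t [c [_ [_ [_ E]]]]]] //.
case: E => E; rewrite pi_sync in E; subst s; by exists C'.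
Qed.

Lemma bridge_st (Hs : synchronizable1 S) u (C : config S) :
  run1 ch0 u ch0 -> reach (c0 S) u C -> chan C = ch0 -> reach (c0 S) (sync (pi_send u)) C.
Proof.
move=> Hr HC Hch.
have : @ST M S 1 (inr (pi_send u, C)).
  right; exists u, C; split; first by split; [exact: kfifo_run1 Hr | by exists C].
  by split => //; split => // i j; rewrite Hch.
move/Hs => [[t [_ E]] | [t [c [[[s ->] _] [Hc [_ E]]]]]] //.
by case: E; rewrite pi_sync => -> Ec; subst.
Qed.

Lemma mixP u chF (P : forall i, St S i -> Prop) :
  run1 ch0 u chF ->
  (forall i, exists y, lrun (init S i) (proj i u) y /\ P i y) ->
  exists C : config S, reach (c0 S) u C /\ chan C = chF /\ forall i, P i (cstate C i).
Proof.
move=> Hr H.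
pose f := fun i => proj1_sig (constructive_indefinite_description _ (H i)).
have Hf : forall i, lrun (init S i) (proj i u) (f i) /\ P i (f i).
  by move=> i; rewrite /f; case: (constructive_indefinite_description _ _).
exists (Config f chF); split; last by split => // i; case: (Hf i).
apply: (reach_of_lruns Hr) => // i; by case: (Hf i).
Qed.

Lemma mix0 u chF : run1 ch0 u chF ->
  (forall i, exists y, lrun (init S i) (proj i u) y) ->
  exists C : config S, reach (c0 S) u C /\ chan C = chF.
Proof.
move=> Hr H.
have [C [HC [Hch _]]] := @mixP u chF (fun _ _ => True) Hr
  (fun i => let: ex_intro y Hy := H i in ex_intro _ y (conj Hy I)).
by exists C.
Qed.

Lemma mix1 u chF (p0 : peer) (Cx : config S) : run1 ch0 u chF ->
  lrun (init S p0) (proj p0 u) (cstate Cx p0) ->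
  (forall i, i != p0 -> exists y, lrun (init S i) (proj i u) y) ->
  exists C : config S, reach (c0 S) u C /\ chan C = chF /\ cstate C p0 = cstate Cx p0.
Proof.
move=> Hr Hp H.
have H' : forall i, exists y, lrun (init S i) (proj i u) y /\ (i = p0 -> y = cstate Cx i).
  move=> i; case: (eqVneq i p0) => [->|ne]; first by exists (cstate Cx p0).
  have [y Hy] := H i ne; exists y; split => // E; by rewrite E eqxx in ne.
have [C [HC [Hch HP]]] := @mixP u chF (fun i y => i = p0 -> y = cstate Cx i) Hr H'.
by exists C; split => //; split => //; apply: HP.
Qed.

Lemma lrun_pre (t u w : tr) (C : config S) i :
  reach (c0 S) t C -> proj i u ++ w = proj i t -> exists y, lrun (init S i) (proj i u) y.
Proof.
move=> HC E; have := reach_lrun HC i; rewrite -E => /lrun_cat [y [Hy _]].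
by exists y.
Qed.

Lemma lrun_eq (t u : tr) (C : config S) i :
  reach (c0 S) t C -> proj i u = proj i t -> lrun (init S i) (proj i u) (cstate C i).
Proof. by move=> HC ->; exact: reach_lrun HC i. Qed.

Lemma proj_cat i (t1 t2 : tr) : proj i (t1 ++ t2) = proj i t1 ++ proj i t2.
Proof. by rewrite /proj filter_cat. Qed.

Lemma proj_cons i (x : action M) (t : tr) :
  proj i (x :: t) = (if actor x == i then [:: x] else [::]) ++ proj i t.
Proof. by rewrite /proj /=; case: ifP. Qed.

Lemma proj_nil i : proj i [::] = [::].
Proof. by []. Qed.

Lemma setch_other ch (a b : Msg) w : src b != src a ->
  setch ch a w (src b) (dst b) = ch (src b) (dst b).
Proof.
move=> ne; rewrite /setch /on_chan; case: ifP => //.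
by case/andP => /eqP E _; rewrite E eqxx in ne.
Qed.

End Aux.


Set Implicit Arguments. Unset Strict Implicit. Unset Printing Implicit Defensive.

Section Main.
Variable M : msgset.
Variable S : system M.
Notation Msg := (msg M).
Notation peer := ('I_(npeers M)).
Notation tr := (trace M).
Local Notation ch0M := (@ch0 M).

Lemma stageH (Hs : synchronizable1 S) (w bs : seq Msg) (a : Msg)
 (HA : exists C, reach (c0 S) (sync (w ++ [:: a])) C)
 (HB : exists C, reach (c0 S) (sync (w ++ bs)) C)
 (Hsrc : forall b, b \in bs -> src b != src a) :
 forall k, k <= size bs -> exists C, reach (c0 S) (sync (w ++ a :: take k bs)) C.
Proof.
elim=> [|k IH] Hk; first by rewrite take0.
have Hk' : k < size bs by [].
have [C1 HC1] := IH (ltnW Hk).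
have [CB HCB] := HB.
set b := nth a bs k.
have bin : b \in bs := mem_nth a Hk'.
have eb : (src b == src a) = false := negbTE (Hsrc b bin).
have ea : (dst a == src a) = false by rewrite eq_sym (negbTE (src_neq_dst a)).
have Ebs : bs = take k bs ++ b :: drop k.+1 bs by rewrite -drop_nth // cat_take_drop.
set u := sync w ++ [:: Send a] ++ sync (take k bs) ++ [:: Send b].
have Hr : run1 ch0M u (setch (setch ch0M a [:: a]) b [:: b]).
  apply: run1_cat (run1_sync0 w) _.
  apply: run1_cat (run1_send _ _) _ => //.
  apply: run1_cat.
    apply: run1_sync; first by apply: bnd_setch.
    move=> b' /mem_take Hb'; rewrite setch_other //; exact: Hsrc.
  apply: run1_send; first by apply: bnd_setch.
  by rewrite setch_other // eb.
have [C [HC _]] : exists C : config S, reach (c0 S) u C /\ chan C = setch (setch ch0M a [:: a]) b [:: b].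
  apply: (mix0 Hr) => i.
  case: (eqVneq i (src a)) => [->|ne].
    exists (cstate C1 (src a)); apply: (lrun_eq HC1).
    rewrite /u !sync_cat !sync_cons !proj_cat !proj_cons !proj_nil /= eqxx ea eb /=.
    by rewrite !cats0.
  have hi : (src a == i) = false by rewrite eq_sym (negbTE ne).
  apply: (lrun_pre (w := proj i [:: Recv b] ++ proj i (sync (drop k.+1 bs))) HCB).
  rewrite /u [in RHS]Ebs !sync_cat !sync_cons !proj_cat !proj_cons !proj_nil /= hi /=.
  by rewrite -?catA.
have := bridge Hs Hr HC.
rewrite /u !pi_send_cat !pi_sync /= (take_nth a Hk') -cats1 -/b.
by [].
Qed.

Lemma stageG (Hs : synchronizable1 S) (w bs : seq Msg) (a : Msg)
 (HA : exists C, reach (c0 S) (sync (w ++ [:: a])) C)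
 (HB : exists C, reach (c0 S) (sync (w ++ bs)) C)
 (Hsrc : forall b, b \in bs -> src b != src a) :
 forall k, k <= size bs -> exists C, reach (c0 S) (sync (w ++ take k bs ++ [:: a])) C.
Proof.
elim=> [|k IH] Hk; first by rewrite take0.
have Hk' : k < size bs by [].
have [C1 HC1] := IH (ltnW Hk).
have [CB HCB] := HB.
set b := nth a bs k.
have bin : b \in bs := mem_nth a Hk'.
have eb : (src b == src a) = false := negbTE (Hsrc b bin).
have eb' : (src a == src b) = false by rewrite eq_sym.
have ea : (dst a == src a) = false by rewrite eq_sym (negbTE (src_neq_dst a)).
have Ebs : bs = take k bs ++ b :: drop k.+1 bs by rewrite -drop_nth // cat_take_drop.
set u := sync (w ++ take k bs) ++ [:: Send b] ++ [:: Send a].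
have Hr : run1 ch0M u (setch (setch ch0M b [:: b]) a [:: a]).
  apply: run1_cat (run1_sync0 _) _.
  apply: run1_cat (run1_send _ _) _ => //.
  apply: run1_send; first by apply: bnd_setch.
  by rewrite setch_other // eb'.
have [C [HC _]] : exists C : config S, reach (c0 S) u C /\ chan C = setch (setch ch0M b [:: b]) a [:: a].
  apply: (mix0 Hr) => i.
  case: (eqVneq i (src a)) => [->|ne].
    exists (cstate C1 (src a)); apply: (lrun_eq HC1).
    rewrite /u !sync_cat !sync_cons !proj_cat !proj_cons !proj_nil /= eqxx ea eb /=.
    by rewrite -?catA ?cats0.
  have hi : (src a == i) = false by rewrite eq_sym (negbTE ne).
  apply: (lrun_pre (w := proj i [:: Recv b] ++ proj i (sync (drop k.+1 bs))) HCB).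
  rewrite /u [in RHS]Ebs !sync_cat !sync_cons !proj_cat !proj_cons !proj_nil /= hi /=.
  by rewrite -?catA.
have := bridge Hs Hr HC.
rewrite /u !pi_send_cat !pi_sync /= (take_nth a Hk') -cats1 -/b -?catA.
by [].
Qed.

Lemma setch0 (a : Msg) : setch (setch ch0M a [:: a]) a [::] = ch0M.
Proof. by rewrite setch_setch; exact: (setch_id ch0M a). Qed.

Lemma stageQ (Hs : synchronizable1 S) (w bs : seq Msg) (a : Msg) (C1 C2 : config S)
 (H1 : reach (c0 S) (sync (w ++ a :: bs)) C1)
 (H2 : reach (c0 S) (sync (w ++ bs ++ [:: a])) C2)
 (Hsrc : forall b, b \in bs -> src b != src a) :
 exists C, reach (c0 S) (sync (w ++ a :: bs)) C /\ chan C = ch0M /\ cstate C (dst a) = cstate C2 (dst a).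
Proof.
have ea : (src a == dst a) = false by rewrite (negbTE (src_neq_dst a)).
set u := sync w ++ [:: Send a] ++ sync bs ++ [:: Recv a].
have Hr : run1 ch0M u ch0M.
  apply: run1_cat (run1_sync0 _) _.
  apply: run1_cat (run1_send _ _) _ => //.
  apply: run1_cat.
    apply: run1_sync; first by apply: bnd_setch.
    move=> b' Hb'; rewrite setch_other //; exact: Hsrc.
  have Hrv := @run1_recv _ (setch ch0M a [:: a]) a (bnd_setch _ _ _) (setch_eq _ _ _).
  by rewrite setch0 in Hrv; apply: Hrv.
have [C [HC [Hch Hq]]] : exists C : config S, reach (c0 S) u C /\ chan C = ch0M /\
     cstate C (dst a) = cstate C2 (dst a).
  apply: (mix1 Hr).
    apply: (lrun_eq H2).
    rewrite /u !sync_cat !sync_cons !proj_cat !proj_cons !proj_nil /= eqxx ea /=.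
    by rewrite ?cats0.
  move=> i ne; exists (cstate C1 i); apply: (lrun_eq H1).
  have hi : (dst a == i) = false by rewrite eq_sym (negbTE ne).
  rewrite /u !sync_cat !sync_cons !proj_cat !proj_cons !proj_nil /= hi /=.
  by case: (src a == i); rewrite /= -?catA ?cats0.
exists C; split => //.
have := bridge_st Hs Hr HC Hch.
by rewrite /u !pi_send_cat !pi_sync /= cats0.
Qed.

Lemma setch_swap (a b : Msg) : src b != src a ->
  setch (setch (setch ch0M b [:: b]) a [:: a]) b [::] = setch ch0M a [:: a].
Proof.
move=> ne; apply: functional_extensionality => i; apply: functional_extensionality => j.
rewrite /setch; case Hb: (on_chan i j b) => //; case Ha: (on_chan i j a) => //.
move: Hb Ha => /on_chanE [E1 _] /on_chanE [E2 _].
by rewrite E1 E2 eqxx in ne.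
Qed.

Lemma stageP (Hs : synchronizable1 S) (w bs : seq Msg) (a : Msg) (Cq C2 : config S)
 (H1 : reach (c0 S) (sync (w ++ a :: bs)) Cq)
 (H2 : reach (c0 S) (sync (w ++ bs ++ [:: a])) C2)
 (Hsrc : forall b, b \in bs -> src b != src a) :
 forall j, j <= size bs -> exists Cj : config S,
   reach (c0 S) (sync (w ++ take j bs ++ a :: drop j bs)) Cj /\ cstate Cj (src a) = cstate Cq (src a).
Proof.
elim=> [|j IH] Hj; first by exists Cq; rewrite take0 drop0.
have Hj' : j < size bs by [].
have [Cj [HCj ECj]] := IH (ltnW Hj).
set b := nth a bs j.
have bin : b \in bs := mem_nth a Hj'.
have neb : src b != src a := Hsrc b bin.
have eb : (src b == src a) = false := negbTE neb.
have eb' : (src a == src b) = false by rewrite eq_sym.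
have ea : (dst a == src a) = false by rewrite eq_sym (negbTE (src_neq_dst a)).
have Ed : drop j bs = b :: drop j.+1 bs by rewrite -drop_nth.
have Ebs : bs = take j bs ++ b :: drop j.+1 bs by rewrite -Ed cat_take_drop.
set u := sync (w ++ take j bs) ++ [:: Send b] ++ [:: Send a] ++ [:: Recv b] ++
   sync (drop j.+1 bs) ++ [:: Recv a].
have Hr : run1 ch0M u ch0M.
  apply: run1_cat (run1_sync0 _) _.
  apply: run1_cat (run1_send _ _) _ => //.
  apply: run1_cat.
    apply: run1_send; first by apply: bnd_setch.
    by rewrite setch_other // eb'.
  apply: run1_cat.
    have Hb1 : bnd (setch (setch ch0M b [:: b]) a [:: a]).
      by apply: bnd_setch => //; apply: bnd_setch.
    have Hrv := @run1_recv _ _ b Hb1.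
    rewrite setch_swap // in Hrv; apply: Hrv => //.
    by rewrite setch_other // setch_eq.
  apply: run1_cat.
    apply: run1_sync; first by apply: bnd_setch.
    move=> b' /mem_drop Hb'; rewrite setch_other //; exact: Hsrc.
  have Hrv := @run1_recv _ (setch ch0M a [:: a]) a (bnd_setch _ _ _) (setch_eq _ _ _).
  by rewrite setch0 in Hrv; apply: Hrv.
have [C [HC [Hch Hp]]] : exists C : config S, reach (c0 S) u C /\ chan C = ch0M /\
     cstate C (src a) = cstate Cj (src a).
  apply: (mix1 Hr).
    apply: (lrun_eq HCj).
    rewrite /u Ed !sync_cat !sync_cons !proj_cat !proj_cons !proj_nil /= eqxx ea eb /=.
    by case: (dst b == src a); rewrite /= -?catA ?cats0.
  move=> i ne; exists (cstate C2 i); apply: (lrun_eq H2).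
  have hi : (src a == i) = false by rewrite eq_sym (negbTE ne).
  rewrite /u [in RHS]Ebs !sync_cat !sync_cons !proj_cat !proj_cons !proj_nil /= hi /=.
  by case: (src b == i); case: (dst b == i); case: (dst a == i); rewrite /= -?catA ?cats0.
exists C; split; last by rewrite Hp.
have := bridge_st Hs Hr HC Hch.
rewrite /u !pi_send_cat !pi_sync /= (take_nth a Hj') -cats1 -/b -?catA ?cats0.
by [].
Qed.

End Main.

Unset Implicit Arguments.

Theorem lemma4p5 (M : msgset) (S : system M) (tau : trace M) (a : msg M) (bs : seq (msg M)) :
  synchronizable1 S ->
  inT S 0 tau ->
  inT S 0 (tau ++ sync [:: a]) ->
  inT S 0 (tau ++ sync bs) ->
  (forall b, b \in bs -> src a != src b) ->
  [/\ inT S 0 (tau ++ sync [:: a] ++ sync bs),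
      inT S 0 (tau ++ sync bs ++ sync [:: a])
    & equivS S (tau ++ sync [:: a] ++ sync bs) (tau ++ sync bs ++ sync [:: a])].
Proof.
move=> Hs [[w ->] _] [_ [CA HA]] [_ [CB HB]] Hsrc.
rewrite -sync_cat in HA; rewrite -sync_cat in HB.
have Hsrc' : forall b, b \in bs -> src b != src a by move=> b /Hsrc; rewrite eq_sym.
have [C1 H1] := stageH Hs (ex_intro _ CA HA) (ex_intro _ CB HB) Hsrc' (leqnn (size bs)).
rewrite take_size in H1.
have [C2 H2] := stageG Hs (ex_intro _ CA HA) (ex_intro _ CB HB) Hsrc' (leqnn (size bs)).
rewrite take_size in H2.
have [Cq [Hq [Hch Hqq]]] := stageQ Hs H1 H2 Hsrc'.
have [Cn [Hn Hnp]] := stageP Hs Hq H2 Hsrc' (leqnn (size bs)).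
rewrite take_size drop_size in Hn.
have Hq2 : reach (c0 S) (sync (w ++ bs ++ [:: a])) Cq.
  have -> : Cq = Config (cstate Cq) (@ch0 M) by case: Cq Hq Hch Hqq Hnp => ? ? /= _ ->.
  apply: (reach_of_lruns (run1_sync0 _)) => // i.
  case: (eqVneq i (src a)) => [->|nea]; first by rewrite -Hnp; exact: reach_lrun Hn _.
  case: (eqVneq i (dst a)) => [->|neb]; first by rewrite Hqq; exact: reach_lrun H2 _.
  have -> : proj i (sync (w ++ bs ++ [:: a])) = proj i (sync (w ++ a :: bs)).
    have h1 : (src a == i) = false by rewrite eq_sym (negbTE nea).
    have h2 : (dst a == i) = false by rewrite eq_sym (negbTE neb).
    by rewrite !sync_cat !sync_cons !proj_cat !proj_cons !proj_nil /= h1 h2 /= ?cats0.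
  exact: reach_lrun Hq _.
have E1 : sync w ++ sync [:: a] ++ sync bs = sync (w ++ a :: bs) by rewrite -!sync_cat.
have E2 : sync w ++ sync bs ++ sync [:: a] = sync (w ++ bs ++ [:: a]) by rewrite -!sync_cat.
rewrite E1 E2.
have K := fun s => kfifo_run1 (run1_sync0 (M:=M) s).
split.
- by split; [eexists | exists Cq].
- by split; [eexists | exists Cq].
- split; first by exists 1; split => //; split; [exact: K | exists Cq].
  split; first by exists 1; split => //; split; [exact: K | exists Cq].
  by exists Cq.
Qed.
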